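(* Let $\pi=(\pi_n^{n+1}\colon(X_{n+1},f_{n+1})\to(X_n,f_n))_{n\ge1}$ be an inverse sequence of equivariant maps satisfying MLC(1), and let $(X,f)=\lim_\pi(X_n,f_n)$. Suppose $Y_n\subset X_n$, $n\ge1$, are closed $f_n$-invariant subsets such that (1) $\pi_n^{n+1}(Y_{n+1})\subset Y_n$ for every $n\ge1$, and (2) every $x=(x_n)_{n\ge1}\in X$ satisfies $x_n\in Y_n$ for all $n\ge1$. Let $g_n=f_n|_{Y_n}$ and $\tilde\pi_n^{n+1}=\pi_n^{n+1}|_{Y_{n+1}}\colon Y_{n+1}\to Y_n$. Then the inverse sequence $\tilde\pi=(\tilde\pi_n^{n+1}\colon(Y_{n+1},g_{n+1})\to(Y_n,g_n))_{n\ge1}$ satisfies MLC(1).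
   Context: Each $X_n$ is a compact metric space, $f_n$ a continuous self-map, $\pi_n^{n+1}\colon X_{n+1}\to X_n$ continuous with $f_n\circ\pi_n^{n+1}=\pi_n^{n+1}\circ f_{n+1}$. $X=\{(x_n)\in\prod_n X_n:\pi_n^{n+1}(x_{n+1})=x_n\ \forall n\}$ and $f((x_n))=(f_n(x_n))$. For $m\ge n$, $\pi_n^m=\pi_n^{n+1}\circ\cdots\circ\pi_{m-1}^m$ ($\pi_n^n$ the identity). An inverse sequence $(p_n\colon Z_{n+1}\to Z_n)$ satisfies MLC(1) if $p_n(Z_{n+1})=p_n(p_{n+1}(Z_{n+2}))$ for every $n\ge1$. *)

(* Defs.v *)
From HB Require Import structures.
From mathcomp Require Import all_boot all_order all_algebra.
From mathcomp Require Import all_classical all_reals all_analysis.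
Set Implicit Arguments. Unset Strict Implicit. Unset Printing Implicit Defensive.
Local Open Scope classical_set_scope.

(* Inverse limit of an inverse sequence (p n : Z n.+1 -> Z n), indices from 0. *)
Definition invlim (Z : nat -> Type) (p : forall n, Z n.+1 -> Z n) :
  set (forall n, Z n) :=
  [set x | forall n, p n (x n.+1) = x n].

(* MLC(1) for the inverse sequence of restrictions p n|_{Y n.+1} : Y n.+1 -> Y n
   (assuming p n (Y n.+1) ⊆ Y n):  p n (Y n.+1) = p n (p n.+1 (Y n.+2)). *)
Definition MLC1_on (Z : nat -> Type) (p : forall n, Z n.+1 -> Z n)
  (Y : forall n, set (Z n)) : Prop :=
  forall n, p n @` Y n.+1 = p n @` (p n.+1 @` Y n.+2).

Definition MLC1 (Z : nat -> Type) (p : forall n, Z n.+1 -> Z n) : Prop :=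
  MLC1_on p (fun n => [set: Z n]).

(* Main.v *)
Require Import Defs.
From HB Require Import structures.
From mathcomp Require Import all_boot all_order all_algebra.
From mathcomp Require Import all_classical all_reals all_analysis.
Local Open Scope classical_set_scope.
Set Implicit Arguments. Unset Strict Implicit.

Definition KK (Z : nat -> Type) (p : forall n, Z n.+1 -> Z n) m : set (Z m) :=
  p m @` setT.
Arguments KK {Z} p m _.

Lemma Klift (Z : nat -> Type) (p : forall n, Z n.+1 -> Z n) :
  MLC1 p -> forall m b, KK p m b -> exists c, KK p m.+1 c /\ p m c = b.
Proof.
move=> H m b [y _ <-]; have := H m; rewrite /KK => E.
have : (p m @` [set: Z m.+1]) (p m y) by exists y.
rewrite E; case=> c Kc e; by exists c.
Qed.

Definition liftK (Z : nat -> Type) (p : forall n, Z n.+1 -> Z n) (H : MLC1 p)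
  m (s : {b : Z m | KK p m b}) : {c : Z m.+1 | KK p m.+1 c /\ p m c = sval s} :=
  cid (Klift H (proj2_sig s)).

Fixpoint up (Z : nat -> Type) (p : forall n, Z n.+1 -> Z n) (H : MLC1 p)
  n (a : {b : Z n | KK p n b}) k : {b : Z (k + n) | KK p (k + n) b} :=
  match k return {b : Z (k + n) | KK p (k + n) b} with
  | 0 => a
  | k'.+1 => let c := @liftK Z p H _ (@up Z p H n a k') in
             exist _ (sval c) (proj1 (proj2_sig c))
  end.
Arguments up {Z p} H {n} a k.

Fixpoint pdn (Z : nat -> Type) (p : forall n, Z n.+1 -> Z n) m d : Z (d + m) -> Z m :=
  match d return Z (d + m) -> Z m with
  | 0 => fun z => z
  | d'.+1 => fun z => @pdn Z p m d' (p (d' + m) z)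
  end.
Arguments pdn {Z} p m d _.

Definition castZ (Z : nat -> Type) i j (e : i = j) (z : Z i) : Z j :=
  eq_rect i Z z j e.

Lemma castZ_id (Z : nat -> Type) i (e : i = i) (z : Z i) : castZ e z = z.
Proof. by rewrite (eq_irrelevance e erefl). Qed.

Lemma castZ_p (Z : nat -> Type) (p : forall n, Z n.+1 -> Z n) i j
  (e : i = j) (e' : i.+1 = j.+1) (z : Z i.+1) :
  castZ e (p i z) = p j (castZ e' z).
Proof. case: j / e e'. move=> e'; by rewrite !castZ_id. Qed.

Lemma castZ_comp (Z : nat -> Type) i j k (e : i = j) (e' : j = k) (e'' : i = k)
  (z : Z i) : castZ e' (castZ e z) = castZ e'' z.
Proof. case: j / e e'. move=> e'; case: k / e' e''=> e''; by rewrite !castZ_id. Qed.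

Lemma pdnA (Z : nat -> Type) (p : forall n, Z n.+1 -> Z n) d m (z : Z (d + m.+1)) :
  p m (pdn p m.+1 d z) = pdn p m d.+1 (castZ (addnS d m) z).
Proof.
elim: d m z => [|d IH] m z /=; first by rewrite castZ_id.
rewrite IH /=; congr (pdn p m d _).
congr (p _ _); exact: castZ_p.
Qed.

Lemma pdn_up (Z : nat -> Type) (p : forall n, Z n.+1 -> Z n) (H : MLC1 p)
  n (a : {b : Z n | KK p n b}) k : pdn p n k (sval (up H a k)) = sval a.
Proof.
elim: k => [|k IH] //=.
by rewrite (proj2 (proj2_sig (liftK H (up H a k)))).
Qed.

Lemma Kthread (Z : nat -> Type) (p : forall n, Z n.+1 -> Z n) (H : MLC1 p)
  n (a : {b : Z n | KK p n b}) :
  exists x : forall m, Z m, invlim p x /\ x n = sval a.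
Proof.
exists (fun m => pdn p m n (castZ (addnC m n) (sval (up H a m)))); split.
  move=> m /=.
  rewrite pdnA /=.
  rewrite (@castZ_comp Z _ _ _ _ _ (f_equal S (addnC m n))).
  set c := liftK H (up H a m).
  have E := castZ_p p (addnC m n) (f_equal S (addnC m n)) (sval c).
  have E2 : p (m + n) (sval c) = sval (up H a m) := proj2 (proj2_sig c).
  by rewrite -E E2.
by rewrite castZ_id pdn_up.
Qed.

Theorem lemma3p4 (R : realType) (X : nat -> pseudoMetricType R)
  (f : forall n, X n -> X n) (p : forall n, X n.+1 -> X n)
  (Y : forall n, set (X n)) :
  (forall n, compact [set: X n]) ->
  (forall n, hausdorff_space (X n)) ->
  (forall n, continuous (f n)) ->
  (forall n, continuous (p n)) ->
  (forall n, f n \o p n = p n \o f n.+1) ->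
  MLC1 p ->
  (forall n, closed (Y n)) ->
  (forall n, f n @` Y n `<=` Y n) ->
  (forall n, p n @` Y n.+1 `<=` Y n) ->
  (forall x, invlim p x -> forall n, Y n (x n)) ->
  MLC1_on p Y.
Proof.
move=> _ _ _ _ _ H _ _ pY hY n.
have KY : forall m b, KK p m b -> Y m b.
  move=> m b Kb; have [x [ix xe]] := Kthread H (exist _ b Kb).
  by rewrite -[b]/(sval (exist (KK p m) b Kb)) -xe; apply: hY.
apply/seteqP; split => b.
  case=> y Yy <-.
  have [c [Kc pc]] := Klift H (ex_intro2 _ _ y I erefl : KK p n (p n y)).
  have [d [Kd pd]] := Klift H Kc.
  exists c => //; rewrite -pd; exists d => //; exact: KY.
case=> c [d Yd <-] <-; exists (p n.+1 d) => //; apply: pY; by exists d.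
Qed.
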